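(* Let $n\ge 1$ and let $\mathbb{P}$ be a set of distinct unique configurations of length $n$. Then $K(n)=\Omega(\log|\mathbb{P}|)$; more precisely $K(n)\ge\lceil\log_3|\mathbb{P}|\rceil$.
   Context: For a real sequence $A=(a_1,\dots,a_n)$, a configuration is a sequence $P=(p_1,\dots,p_n)$ with $p_\ell\in\{1,\dots,n-\ell+1\}$ for each $\ell$; $P$ is an output configuration for $A$ if for every $\ell=1,\dots,n$ the sum $a_{p_\ell}+\dots+a_{p_\ell+\ell-1}$ is maximum among all sums of $\ell$ consecutive entries of $A$. Let $\mathcal{P}(A)$ be the set of output configurations of $A$. A configuration $P$ is unique if there exists $A\in\mathbb{R}^n$ with $\mathcal{P}(A)=\{P\}$. The MCSP (in this form) asks, given $A$, to output some output configuration for $A$. A decision tree algorithm for inputs of length $n$ is a ternary tree: each internal node holds a test ''$f(A)<0$, $=0$, or $>0$?'' for some rational function $f$ of the $n$ inputs, with one branch per outcome; each leaf holds functions $g_1,\dots,g_n$ and outputs $P=(g_1(A),\dots,g_n(A))$. The tree solves MCSP if for every input $A$ the output at the reached leaf is an output configuration for $A$. Its cost is its height, and $K(n)$ is the minimum cost of a decision tree solving MCSP for inputs of length $n$. *)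

(* Defs.v *)
From HB Require Import structures.
From mathcomp Require Import all_boot all_order all_algebra.
From mathcomp Require Import reals.
From mathcomp Require Import mpoly.

Set Implicit Arguments.
Unset Strict Implicit.
Unset Printing Implicit Defensive.

Import Order.TTheory GRing.Theory Num.Theory.
Local Open Scope ring_scope.

Section MCSP.
Variables (R : realType) (n : nat).

(* Input sequence A = (a_1,...,a_n), stored 0-based: A i = a_{i+1}. *)
Definition input := 'I_n -> R.

(* Sum of the l consecutive entries starting at 0-based position s,
   i.e. a_{s+1} + ... + a_{s+l}. *)
Definition segsum (A : input) (s l : nat) : R :=
  \sum_(j < n | (s <= j < s + l)%N) A j.

(* A configuration P = (p_1,...,p_n) is stored as a finite function on
   'I_n with P i = p_{i+1} (1-based values).  p_l ranges over {1..n-l+1}. *)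
Definition config := {ffun 'I_n -> nat}.

Definition is_config (P : config) : Prop :=
  forall i : 'I_n, (1 <= P i <= n - i)%N.

Definition output_config (A : input) (P : config) : Prop :=
  is_config P /\
  forall (i : 'I_n) (s : nat), (s + i.+1 <= n)%N ->
    segsum A s i.+1 <= segsum A (P i).-1 i.+1.

Definition unique_config (P : config) : Prop :=
  exists A : input, forall Q : config, output_config A Q <-> Q = P.

(* A rational function in n variables with real coefficients, given as a
   numerator/denominator pair of polynomials; it is evaluated with the
   total MathComp division (x / 0 = 0). *)
Definition ratfun := ({mpoly R[n]} * {mpoly R[n]})%type.

Definition rf_eval (f : ratfun) (A : input) : R := f.1.@[A] / f.2.@[A].

Inductive dtree :=
| DLeaf of ('I_n -> ratfun)
| DNode of ratfun & dtree & dtree & dtree. (* branches: < 0, = 0, > 0 *)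

Fixpoint height (T : dtree) : nat :=
  match T with
  | DLeaf _ => 0
  | DNode _ t1 t2 t3 => (maxn (height t1) (maxn (height t2) (height t3))).+1
  end.

Fixpoint reach (T : dtree) (A : input) : 'I_n -> ratfun :=
  match T with
  | DLeaf g => g
  | DNode f tlt teq tgt =>
      let v := rf_eval f A in
      if v < 0 then reach tlt A else if v == 0 then reach teq A
      else reach tgt A
  end.

Definition solves_MCSP (T : dtree) : Prop :=
  forall A : input, exists P : config,
    output_config A P /\
    forall i : 'I_n, rf_eval (reach T A i) A = (P i)%:R.

End MCSP.

(* Main.v *)
Require Import Defs.
From HB Require Import structures.
From mathcomp Require Import all_boot all_order all_algebra.
From mathcomp Require Import reals.
From mathcomp Require Import mpoly.
From mathcomp Require Import polyrcf.
From mathcomp Require Import zify ring.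
From Stdlib Require Import Classical ClassicalEpsilon.
Set Implicit Arguments. Unset Strict Implicit. Unset Printing Implicit Defensive.
Import Order.TTheory GRing.Theory Num.Theory Num.Def.
Local Open Scope ring_scope.

Section Nbr.
Variable R : realType.

Definition nbr (Pr : R -> Prop) := exists2 e : R, 0 < e & forall t, 0 < t < e -> Pr t.

Lemma nbr_and (P1 P2 : R -> Prop) : nbr P1 -> nbr P2 -> nbr (fun t => P1 t /\ P2 t).
Proof.
move=> [e1 e1p H1] [e2 e2p H2]; exists (Num.min e1 e2); first by rewrite lt_min e1p.
move=> t /andP[t0]; rewrite lt_min => /andP[a b]; split; [apply: H1|apply: H2]; apply/andP; split => //.
Qed.

Lemma nbr_impl (P1 P2 : R -> Prop) : (forall t, P1 t -> P2 t) -> nbr P1 -> nbr P2.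
Proof. by move=> H [e ep H1]; exists e => // t /H1/H. Qed.

Lemma nbr_ex (P1 : R -> Prop) : nbr P1 -> exists t, 0 < t /\ P1 t.
Proof.
move=> [e ep H]; exists (e / 2%:R); split; first by rewrite divr_gt0.
apply: H; rewrite divr_gt0 //= ltr_pdivrMr // ltr_pMr //.
by rewrite ltr1n.
Qed.

Lemma nbr_seq (T : eqType) (s : seq T) (Pr : T -> R -> Prop) :
  (forall x, x \in s -> nbr (Pr x)) -> nbr (fun t => forall x, x \in s -> Pr x t).
Proof.
elim: s => [|a s IH] H.
  by exists 1 => // t _ x; rewrite in_nil.
have := nbr_and (H a (mem_head _ _)) (IH (fun x xs => H x (@mem_behead _ (a :: s) x xs))).
apply: nbr_impl => t [Ha Hs] x; rewrite in_cons => /orP[/eqP->//|]; exact: Hs.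
Qed.

Lemma nbr_fin (T : finType) (Pr : T -> R -> Prop) :
  (forall x, nbr (Pr x)) -> nbr (fun t => forall x, Pr x t).
Proof.
move=> H; have := @nbr_seq T (enum T) Pr (fun x _ => H x).
by apply: nbr_impl => t Ht x; apply: Ht; rewrite mem_enum.
Qed.

Lemma poly_nbr_nz (q : {poly R}) : q != 0 -> nbr (fun t => q.[t] != 0).
Proof.
move=> q0; exists (next_root q 0 1); first exact: next_root_gt.
move=> t ht; have := @neighpr_root R q 0 1 t.
rewrite /neighpr in_itv /= ht => /(_ isT); by rewrite rootE.
Qed.

Lemma poly_nbr_sg (q : {poly R}) : q.[0] != 0 -> nbr (fun t => sgr q.[t] = sgr q.[0]).
Proof.
move=> q0; have qn0 : q != 0 by apply: contraNneq q0 => ->; rewrite horner0.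
exists (next_root q 0 1); first exact: next_root_gt.
move=> t ht; apply: (@sgr_neighprN R q 0 1) => //; by rewrite /neighpr in_itv /= ht.
Qed.
End Nbr.
Section Line.
Variables (R : realType) (n : nat).
Definition line (A w : input R n) (t : R) : input R n := fun j => A j + t * w j.
Definition linepoly (p : {mpoly R[n]}) (A w : input R n) : {poly R} :=
  mmap (@polyC R) (fun j => (A j)%:P + (w j)%:P * 'X) p.
Lemma linepolyE p A w t : (linepoly p A w).[t] = p.@[line A w t].
Proof.
rewrite mevalE /linepoly /mmap horner_sum; apply: eq_bigr => m _.
rewrite hornerM hornerC /mmap1 horner_prod; congr (_ * _); apply: eq_bigr => i _.
by rewrite horner_exp !hornerE /line mulrC.
Qed.
End Line.

Section Tree.
Variables (R : realType) (n : nat).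
Implicit Types (T : dtree R n) (B : input R n).

Fixpoint lpath T x : seq nat :=
  match T with
  | DLeaf _ => [::]
  | DNode f a b c =>
      let v := rf_eval f x in
      if v < 0 then 0%N :: lpath a x else if v == 0 then 1%N :: lpath b x
      else 2%N :: lpath c x
  end.

Fixpoint tpolys T : seq {mpoly R[n]} :=
  match T with
  | DLeaf _ => [::]
  | DNode f a b c => [:: f.1, f.2 & tpolys a ++ tpolys b ++ tpolys c]
  end.

Lemma lpath_reach T (x y : input R n) : lpath T x = lpath T y -> reach T x = reach T y.
Proof.
elim: T => [g|f a IHa b IHb c IHc] //=.
case: (rf_eval f x < 0); case: (rf_eval f y < 0); case: (rf_eval f x == 0);
  case: (rf_eval f y == 0) => //= H;
  case: H => //; first [ by move/IHa | by move/IHb | by move/IHc ].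
Qed.

Definition generic T B := forall p, p \in tpolys T -> (forall y, p.@[y] = 0) \/ p.@[B] != 0.

Lemma line0 B w : line B w 0 =1 B.
Proof. by move=> j; rewrite /line mul0r addr0. Qed.

Lemma poly_stable (p : {mpoly R[n]}) B w :
  (forall y, p.@[y] = 0) \/ p.@[B] != 0 ->
  nbr (fun t => sgr p.@[line B w t] = sgr p.@[B]).
Proof.
case=> [H|H]; first by exists 1 => // t _; rewrite !H.
have : (linepoly p B w).[0] != 0 by rewrite linepolyE (meval_eq _ (line0 B w)).
move/poly_nbr_sg; apply: nbr_impl => t.
by rewrite !linepolyE (meval_eq _ (line0 B w)).
Qed.

Lemma stable T B w : generic T B -> nbr (fun t => lpath T (line B w t) = lpath T B).
Proof.
elim: T => [g|f a IHa b IHb c IHc] /= G; first by exists 1.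
have G1 : (forall y, f.1.@[y] = 0) \/ f.1.@[B] != 0 by apply: G; rewrite mem_head.
have G2 : (forall y, f.2.@[y] = 0) \/ f.2.@[B] != 0 by apply: G; rewrite !inE eqxx orbT.
have Ga : generic a B by move=> p hp; apply: G; rewrite !inE !mem_cat hp !orbT.
have Gb : generic b B by move=> p hp; apply: G; rewrite !inE !mem_cat hp !orbT.
have Gc : generic c B by move=> p hp; apply: G; rewrite !inE !mem_cat hp !orbT.
have := nbr_and (nbr_and (poly_stable w G1) (poly_stable w G2))
  (nbr_and (IHa Ga) (nbr_and (IHb Gb) (IHc Gc))).
apply: nbr_impl => t [[s1 s2] [ea [eb ec]]].
have sv : sgr (rf_eval f (line B w t)) = sgr (rf_eval f B).
  by rewrite /rf_eval !sgrM !sgrV s1 s2.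
rewrite -sgr_lt0 sv sgr_lt0 -sgr_eq0 sv sgr_eq0.
by rewrite ea eb ec.
Qed.

Lemma size_split (X : Type) (s : seq X) (p1 p2 : pred X) :
  size s = (count p1 s + count (fun z : X => ~~ p1 z && p2 z) s
            + count (fun z : X => ~~ p1 z && ~~ p2 z) s)%N.
Proof.
elim: s => //= x s ->; case: (p1 x); case: (p2 x) => /=; lia.
Qed.

Lemma uniq_le1 (X : eqType) (s : seq X) : uniq s -> {in s &, forall x y, x = y} -> (size s <= 1)%N.
Proof.
case: s => [|x [|y s]] //= /andP[xn _] H.
move: xn; rewrite (H x y) ?inE ?eqxx ?orbT //.
Qed.

Lemma count_tree (X : eqType) T (S : seq X) (pt : X -> input R n) :
  uniq S -> {in S &, injective (fun x => lpath T (pt x))} ->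
  (size S <= 3 ^ height T)%N.
Proof.
elim: T S => [g|f a IHa b IHb c IHc] S uS inj /=.
  by apply: uniq_le1 => // x y xS yS; apply: inj.
set p1 := fun x => rf_eval f (pt x) < 0.
set p2 := fun x => rf_eval f (pt x) == 0.
rewrite (size_split S p1 p2) -!size_filter.
set hm := maxn _ _.
have ha : (3 ^ height a <= 3 ^ hm)%N by rewrite leq_exp2l // leq_maxl.
have hb : (3 ^ height b <= 3 ^ hm)%N by rewrite leq_exp2l // /hm (leq_trans _ (leq_maxr _ _)) // leq_maxl.
have hc : (3 ^ height c <= 3 ^ hm)%N by rewrite leq_exp2l // /hm (leq_trans _ (leq_maxr _ _)) // leq_maxr.
have s1 : (size (filter p1 S) <= 3 ^ hm)%N.
  apply: leq_trans ha; apply: IHa; first exact: filter_uniq.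
  move=> x y; rewrite !mem_filter => /andP[px xS] /andP[py yS] e.
  apply: inj => //=; move: px py; rewrite /p1 => -> ->; by rewrite e.
have s2 : (size (filter (fun x => ~~ p1 x && p2 x) S) <= 3 ^ hm)%N.
  apply: leq_trans hb; apply: IHb; first exact: filter_uniq.
  move=> x y; rewrite !mem_filter => /andP[/andP[px qx] xS] /andP[/andP[py qy] yS] e.
  apply: inj => //=; move: px py qx qy; rewrite /p1 /p2 => /negPf -> /negPf -> -> ->; by rewrite e.
have s3 : (size (filter (fun x => ~~ p1 x && ~~ p2 x) S) <= 3 ^ hm)%N.
  apply: leq_trans hc; apply: IHc; first exact: filter_uniq.
  move=> x y; rewrite !mem_filter => /andP[/andP[px qx] xS] /andP[/andP[py qy] yS] e.
  apply: inj => //=; move: px py qx qy; rewrite /p1 /p2 => /negPf -> /negPf -> /negPf -> /negPf ->; by rewrite e.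
rewrite expnS; lia.
Qed.
End Tree.

Section Main.
Variables (R : realType) (n : nat).

Definition U (P : config n) (x : input R n) :=
  forall (i : 'I_n) (s : nat), (s + i.+1 <= n)%N -> s != (P i).-1 ->
    segsum x s i.+1 < segsum x (P i).-1 i.+1.

Lemma segsum_line (x w : input R n) t s l :
  segsum (line x w t) s l = segsum x s l + t * segsum w s l.
Proof. by rewrite /segsum mulr_sumr -big_split. Qed.

Lemma U_open P x w : U P x -> nbr (fun t => U P (line x w t)).
Proof.
move=> Ux.
have H : forall i : 'I_n, nbr (fun t => forall s, s \in iota 0 n ->
   (s + i.+1 <= n)%N -> s != (P i).-1 ->
    segsum (line x w t) s i.+1 < segsum (line x w t) (P i).-1 i.+1).
  move=> i; apply: nbr_seq => s _.
  case: (boolP ((s + i.+1 <= n)%N && (s != (P i).-1))) => [/andP[h1 h2]|hn]; last first.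
    by exists 1 => // t _ h1 h2; move: hn; rewrite h1 h2.
  set d0 := segsum x (P i).-1 i.+1 - segsum x s i.+1.
  set d1 := segsum w (P i).-1 i.+1 - segsum w s i.+1.
  have d0p : 0 < d0 by rewrite subr_gt0; apply: Ux.
  have : (d0%:P + d1%:P * 'X).[0] != 0 by rewrite !hornerE gt_eqF.
  move/poly_nbr_sg; apply: nbr_impl => t ht _ _.
  move: ht; rewrite !hornerE (gtr0_sg d0p) => /eqP; rewrite sgr_cp0 => hp.
  rewrite -subr_gt0 !segsum_line.
  suff -> : segsum x (P i).-1 i.+1 + t * segsum w (P i).-1 i.+1 -
    (segsum x s i.+1 + t * segsum w s i.+1) = d0 + d1 * t by [].
  rewrite /d0 /d1; ring.
apply: nbr_impl (nbr_fin H) => t Ht i s h1 h2; apply: Ht => //.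
rewrite mem_iota /=; lia.
Qed.

Lemma U_unique P x Q : is_config P -> U P x -> output_config x Q -> Q = P.
Proof.
move=> cP Ux [cQ oQ]; apply/ffunP => i.
have hP := cP i; have hQ := cQ i.
have vP : ((P i).-1 + i.+1 <= n)%N by move: hP => /andP[]; lia.
have vQ : ((Q i).-1 + i.+1 <= n)%N by move: hQ => /andP[]; lia.
case: (eqVneq (Q i).-1 (P i).-1) => [e|ne].
  move: e hP hQ; case: (P i) => //; case: (Q i) => //= ? ? -> //.
have := Ux i _ vQ ne; have := oQ i _ vP.
by move=> a b; move: (le_lt_trans a b); rewrite ltxx.
Qed.

Lemma witness_U P (A : input R n) : (forall Q, output_config A Q <-> Q = P) ->
  is_config P /\ U P A.
Proof.
move=> H; have [cP oP] : output_config A P by apply/H.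
split => // i s v ne; rewrite ltNge; apply/negP => le.
pose Q : config n := [ffun j => if j == i then s.+1 else P j].
have oQ : output_config A Q.
  split.
    move=> j; rewrite /Q ffunE; case: eqP => [->|_]; last exact: cP.
    apply/andP; split => //; lia.
  move=> j s'; rewrite /Q ffunE; case: eqP => [->|_] v'; last exact: oP.
  by rewrite /=; apply: (le_trans _ le); apply: oP.
have := (H Q).1 oQ; move=> /(congr1 (fun F : config n => F i)); rewrite /Q ffunE eqxx => e.
by move: ne; rewrite -e /= eqxx.
Qed.

Lemma generic_exists (ps : seq {mpoly R[n]}) (Pr : input R n -> Prop) x :
  Pr x -> (forall x w, Pr x -> nbr (fun t => Pr (line x w t))) ->
  exists B, Pr B /\ forall p, p \in ps -> (forall y, p.@[y] = 0) \/ p.@[B] != 0.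
Proof.
move=> Px Po; elim: ps => [|q ps [B' [PB' HB']]].
  by exists x; split => // p; rewrite in_nil.
case: (classic (forall y, q.@[y] = 0)) => [q0|].
  exists B'; split => // p; rewrite in_cons => /orP[/eqP->|/HB' //]; by left.
move/not_all_ex_not => [y /eqP qy].
pose w : input R n := fun j => y j - B' j.
have e1 : line B' w 1 =1 y by move=> j; rewrite /line /w mul1r addrC subrK.
have qn : linepoly q B' w != 0.
  apply: contraNneq qy => h; by rewrite -(meval_eq _ e1) -linepolyE h horner0.
have Hs : forall p, p \in ps -> nbr (fun t => (forall y, p.@[y] = 0) \/ p.@[line B' w t] != 0).
  move=> p /HB' hp; have := poly_stable w hp; apply: nbr_impl => t st.
  case: hp => [h|h]; [by left | right]; by rewrite -sgr_eq0 st sgr_eq0.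
have := nbr_ex (nbr_and (nbr_and (poly_nbr_nz qn) (nbr_seq Hs)) (Po _ w PB')).
move=> [t [t0 [[qt pst] Pt]]].
exists (line B' w t); split => // p; rewrite in_cons => /orP[/eqP->|/pst //].
by right; rewrite -linepolyE.
Qed.

Lemma sep (T : dtree R n) P Q (BP BQ : input R n) : solves_MCSP T ->
  is_config P -> U P BP -> generic T BP -> is_config Q -> U Q BQ ->
  lpath T BP = lpath T BQ -> P = Q.
Proof.
move=> sol cP UP gP cQ UQ el; apply/ffunP => i.
have er := lpath_reach el.
set g := reach T BP in er.
set num := (g i).1; set den := (g i).2.
set c : R := (P i)%:R.
have c0 : c != 0 by rewrite /c pnatr_eq0 -lt0n; case/andP: (cP i).
pose w : input R n := fun j => BQ j - BP j.
have e1 : line BP w 1 =1 BQ by move=> j; rewrite /line /w mul1r addrC subrK.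
pose h := linepoly num BP w - c *: linepoly den BP w.
have hE : forall t, h.[t] = num.@[line BP w t] - c * den.@[line BP w t].
  by move=> t; rewrite /h hornerD hornerN hornerZ !linepolyE.
have h0 : h = 0.
  apply/eqP; apply/negP => /negP hn.
  have := nbr_ex (nbr_and (poly_nbr_nz hn) (nbr_and (stable w gP) (U_open w UP))).
  move=> [t [t0 [ht [lt Ut]]]].
  have [P' [oP' vP']] := sol (line BP w t).
  have eP' := U_unique cP Ut oP'; subst P'.
  have := vP' i; rewrite (lpath_reach lt) -/g /rf_eval -/num -/den -/c => ev.
  have dn : den.@[line BP w t] != 0.
    by apply: contra_eqN ev => /eqP ->; rewrite invr0 mulr0 eq_sym.
  by move: ht; rewrite hE -ev divfK // subrr eqxx.
have : h.[1] = 0 by rewrite h0 horner0.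
rewrite hE !(meval_eq _ e1) => /eqP; rewrite subr_eq0 => /eqP nE.
have [Q' [oQ' vQ']] := sol BQ.
have eQ' := U_unique cQ UQ oQ'; subst Q'.
have := vQ' i; rewrite -er /rf_eval -/num -/den nE => ev.
have cQ0 : (Q i)%:R != 0 :> R by rewrite pnatr_eq0 -lt0n; case/andP: (cQ i).
have dn : den.@[BQ] != 0.
  by apply: contra_eqN ev => /eqP ->; rewrite invr0 mulr0 eq_sym.
move: ev; rewrite mulfK // /c => /eqP; rewrite eqr_nat => /eqP.
by [].
Qed.
End Main.

Theorem theorem2 (R : realType) (n : nat) (PP : seq (config n)) :
  (1 <= n)%N ->
  uniq PP ->
  (forall P, P \in PP -> @unique_config R n P) ->
  forall T : dtree R n, solves_MCSP T ->
    (up_log 3 (size PP) <= height T)%N.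
Proof.
move=> n1 uPP hU T sol; apply: up_log_min => //.
have ex : forall P : config n, exists B : input R n,
    P \in PP -> is_config P /\ U P B /\ generic T B.
  move=> P; case: (boolP (P \in PP)) => [Pin|Pn]; last by exists (fun _ => 0).
  have [A HA] := hU P Pin; have [cP UA] := witness_U HA.
  have [B [UB gB]] := generic_exists (tpolys T) UA (fun x w h => U_open w h).
  by exists B.
pose pt P := proj1_sig (constructive_indefinite_description _ (ex P)).
have ptP P : P \in PP -> is_config P /\ U P (pt P) /\ generic T (pt P).
  exact: (proj2_sig (constructive_indefinite_description _ (ex P))).
apply: (count_tree (pt := pt)) => // P Q PP1 PP2 e.
have [cP [UP gP]] := ptP P PP1; have [cQ [UQ _]] := ptP Q PP2.
exact: (sep sol cP UP gP cQ UQ e).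
Qed.
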